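(* Let $p$ have a habit formation logit representation $(v,c)$ and let $x\in X\setminus\{o\}$. The standard logit estimator $\hat v(x)=\log\left(\frac{p(x,\{x,o\})}{p(o,\{x,o\})}\right)$ is unbiased, i.e. $\hat v(x)=v(x)$, if and only if $c(x)=0$.
   Context: $X$ is a finite set containing an outside option $o$; choice sets are subsets of $X$ containing $o$. Given $v:X\to\mathbb{R}$ and $c:X\to\mathbb{R}_{\ge0}$ with $v(o)=c(o)=0$, for each choice set $A$ define the Markov chain on $A$ with transition probabilities from $y$ to $x$ equal to $\frac{e^{v(x)+c(x)\mathbf{1}\{x=y\}}}{\sum_{z\in A}e^{v(z)+c(z)\mathbf{1}\{z=y\}}}$. A random choice rule $p$ has a habit formation logit representation $(v,c)$ if for each choice set $A$, $p(\cdot,A)$ is the stationary distribution of this chain. *)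

(* Defs.v *)
From mathcomp Require Import all_boot all_order all_algebra.
From mathcomp Require Import all_classical all_reals all_analysis.
Set Implicit Arguments. Unset Strict Implicit. Unset Printing Implicit Defensive.
Import Order.TTheory GRing.Theory Num.Theory.
Local Open Scope ring_scope.

Definition choice_set (X : finType) (o : X) (A : {set X}) : Prop := o \in A.

Definition hf_trans (R : realType) (X : finType) (v c : X -> R) (A : {set X})
  (y x : X) : R :=
  expR (v x + c x * (x == y)%:R) /
  \sum_(z in A) expR (v z + c z * (z == y)%:R).

Definition is_stationary (R : realType) (X : finType) (v c : X -> R)
  (A : {set X}) (pi : X -> R) : Prop :=
  [/\ forall x, x \in A -> 0 <= pi x,
      forall x, x \notin A -> pi x = 0,
      \sum_(x in A) pi x = 1 &
      forall x, x \in A -> pi x = \sum_(y in A) pi y * hf_trans v c A y x].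

Definition hf_logit_rep (R : realType) (X : finType) (o : X)
  (p : X -> {set X} -> R) (v c : X -> R) : Prop :=
  [/\ v o = 0, c o = 0, (forall x, 0 <= c x) &
      forall A : {set X}, choice_set o A -> is_stationary v c A (fun x => p x A)].

(* Main.v *)
Require Import Defs.
From mathcomp Require Import all_boot all_order all_algebra.
From mathcomp Require Import all_classical all_reals all_analysis.
From mathcomp Require Import ring lra.
Import Order.TTheory GRing.Theory Num.Theory.
Local Open Scope ring_scope.

Theorem proposition5 (R : realType) (X : finType) (o : X)
  (p : X -> {set X} -> R) (v c : X -> R) (x : X) :
  hf_logit_rep o p v c -> x != o ->
  (ln (p x [set x; o] / p o [set x; o]) = v x <-> c x = 0).
Proof.
move=> [vo co cge0 HA] xo.
set A := [set x; o].
have hA : choice_set o A by rewrite /choice_set !inE eqxx orbT.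
have [nn _ s1 st] := HA A hA.
have xA : x \in A by rewrite !inE eqxx.
have xnot : x \notin [set o] by rewrite inE.
have sumA : forall F : X -> R, \sum_(z in A) F z = F x + F o.
  by move=> F; rewrite /A big_setU1 //= big_set1.
have ox : (o == x) = false by rewrite eq_sym; apply/negbTE.
have px0 := nn x xA. have oA : o \in A by rewrite !inE eqxx orbT.
have po0 := nn o oA.
rewrite sumA in s1.
have := st x xA; rewrite sumA /hf_trans !sumA eqxx ox (negbTE xo) vo co /=.
rewrite !mulr1 !mulr0 !addr0 ?mul0r ?addr0 expR0.
set a := expR (v x); set E := expR (v x + c x).
have a0 : 0 < a := expR_gt0 _. have E0 : 0 < E := expR_gt0 _.
move=> eq.
have key : p x A * (a + 1) = p o A * a * (E + 1).
  have h1 : E + 1 != 0 by rewrite gt_eqF // ltr_wpDr.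
  have h2 : a + 1 != 0 by rewrite gt_eqF // ltr_wpDr.
  move: eq; set px := p x A; set po := p o A => eq.
  have h : px / (E + 1) = po * (a / (a + 1)).
    have -> : px / (E + 1) = px - px * (E / (E + 1)) by field.
    by rewrite {1}eq addrAC subrr add0r.
  have -> : px = px / (E + 1) * (E + 1) by field.
  rewrite h; field; done.
have po_pos : 0 < p o A.
  rewrite lt_def po0 andbT; apply/eqP => h0.
  rewrite h0 mul0r mul0r in key.
  have h1 : 0 < a + 1 by rewrite ltr_wpDr.
  have : p x A = 0.
    by apply/eqP; move: key => /eqP; rewrite mulf_eq0 (gt_eqF h1) orbF.
  lra.
have px_pos : 0 < p x A.
  have h1 : 0 < a + 1 by rewrite ltr_wpDr.
  have : 0 < p x A * (a + 1) by rewrite key !mulr_gt0 // ltr_wpDr.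
  by rewrite pmulr_lgt0.
have rpos : p x A / p o A \is Num.pos by rewrite posrE divr_gt0.
have pf : p x A = p o A * a <-> E = a.
  have pa : p o A * a != 0 by rewrite gt_eqF // mulr_gt0.
  split=> h.
  + rewrite h in key; apply: (addIr 1); apply: (mulfI pa); by rewrite -key.
  + rewrite h in key; apply: (mulIf (x := a + 1)); by [rewrite gt_eqF // ltr_wpDr|].
have rE : (p x A / p o A = a) <-> p x A = p o A * a.
  split=> h; first by rewrite -h mulrCA mulfV ?gt_eqF // mulr1.
  by rewrite h mulrAC mulfV ?gt_eqF // mul1r.
have Ec : E = a <-> c x = 0.
  split=> h; last by rewrite /E h addr0.
  by have := expR_inj h; lra.
split.
- move=> h; apply/Ec/pf/rE; by rewrite -(lnK rpos) h.
- move=> /Ec /pf /rE ->; exact: expRK.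
Qed.
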